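(* For every integer $j\ge 0$: (a) $f^*(3j+2,2)=2j+1+\dfrac{2j+1}{3j+2}$; (b) $f^*(3j+3,2)=2j+2+\dfrac{j+1}{3j+4}$.
   Context: For integers $d\ge 1$, $n\ge 1$, the triangular grid is $T_d(n)=\{(x_1,\dots,x_d)\in\mathbb{Z}_{\ge 0}^d : x_1+\dots+x_d\le n-1\}$. A fractional cover of $T_d(n)$ is an assignment of nonnegative weights $w(H)$ to affine hyperplanes $H$ of $\mathbb{R}^d$ (only finitely many nonzero) such that $\sum_{H\ni p} w(H)\ge 1$ for every $p\in T_d(n)$. $f^*(n,d)$ denotes the minimum of $\sum_H w(H)$ over all fractional covers of $T_d(n)$. *)

(* Defs.v *)
From mathcomp Require Import all_boot all_order all_algebra.
From mathcomp Require Import reals.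
Set Implicit Arguments. Unset Strict Implicit. Unset Printing Implicit Defensive.
Import Order.TTheory GRing.Theory Num.Theory.
Local Open Scope ring_scope.

Definition in_grid (d n : nat) (x : 'I_d -> nat) : bool :=
  (\sum_(i < d) x i <= n.-1)%N.

(* An affine hyperplane of R^d is { y : sum_i a_i y_i = b } with a <> 0.
   A weighted hyperplane is a triple ((a, b), w). A fractional cover is a
   finite list of weighted hyperplanes (finitely many nonzero weights;
   repeated hyperplanes simply add their weights). *)
Definition whyp (R : realType) (d : nat) : Type := (('I_d -> R) * R) * R.

Definition whyp_ok (R : realType) (d : nat) (h : whyp R d) : bool :=
  [exists i, h.1.1 i != 0] && (0 <= h.2).

Definition on_hyp (R : realType) (d : nat) (h : whyp R d) (x : 'I_d -> nat) : bool :=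
  \sum_(i < d) h.1.1 i * (x i)%:R == h.1.2.

Definition frac_cover (R : realType) (d n : nat) (H : seq (whyp R d)) : Prop :=
  all (@whyp_ok R d) H /\
  forall x : 'I_d -> nat, in_grid n x ->
    1 <= \sum_(h <- H | on_hyp h x) h.2.

Definition total_weight (R : realType) (d : nat) (H : seq (whyp R d)) : R :=
  \sum_(h <- H) h.2.

Definition fstar_is (R : realType) (n d : nat) (v : R) : Prop :=
  (exists H : seq (whyp R d), frac_cover n H /\ total_weight H = v) /\
  (forall H : seq (whyp R d), frac_cover n H -> v <= total_weight H).

(* Main.v *)
Require Import Defs.
From mathcomp Require Import all_boot all_order all_algebra.
From mathcomp Require Import reals.
From mathcomp Require Import zify ring lra.
Import Order.TTheory GRing.Theory Num.Theory.
Local Open Scope ring_scope.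

Definition pt (x y : nat) : 'I_2 -> nat := fun i => if val i == 0%N then x else y.
Definition o1 : 'I_2 := @Ordinal 2 1 isT.

Lemma on_hypE (R : realType) (h : whyp R 2) x y :
  on_hyp h (pt x y) = (h.1.1 ord0 * x%:R + h.1.1 o1 * y%:R == h.1.2).
Proof.
rewrite /on_hyp big_ord_recl big_ord_recl big_ord0 addr0 /=.
have -> : lift ord0 (ord0 : 'I_1) = o1 by apply: val_inj.
by [].
Qed.

Lemma in_grid_pt n x y : in_grid n (pt x y) = (x + y <= n.-1)%N.
Proof. by rewrite /in_grid big_ord_recl big_ord_recl big_ord0 addn0. Qed.

Lemma sum_le_all (R : realType) (T : Type) (P : T -> bool) (f g : T -> R) (s : seq T) :
  all P s -> (forall h, P h -> f h <= g h) -> \sum_(h <- s) f h <= \sum_(h <- s) g h.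
Proof.
elim: s => [|a s IH] /=; first by rewrite !big_nil.
move=> /andP[Pa As] Hfg; rewrite !big_cons; apply: lerD; [exact: Hfg | exact: IH].
Qed.

Lemma weak_dual (R : realType) n (H : seq (whyp R 2)) (u : nat -> nat -> R) :
  frac_cover n H ->
  (forall x y, 0 <= u x y) ->
  (forall h : whyp R 2, whyp_ok h ->
     \sum_(p : 'I_n * 'I_n | (p.1 + p.2 < n)%N && on_hyp h (pt p.1 p.2)) u p.1 p.2 <= 1) ->
  \sum_(p : 'I_n * 'I_n | (p.1 + p.2 < n)%N) u p.1 p.2 <= total_weight H.
Proof.
move=> [Hok Hcov] u0 Hl.
apply: (@le_trans _ _ (\sum_(p : 'I_n * 'I_n | (p.1 + p.2 < n)%N)
   \sum_(h <- H) (if on_hyp h (pt p.1 p.2) then u p.1 p.2 * h.2 else 0))).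
  apply: ler_sum => p gp.
  rewrite -big_mkcond /= -mulr_sumr.
  apply: ler_peMr => //.
  apply: Hcov; rewrite in_grid_pt; lia.
rewrite exchange_big /total_weight /=.
apply: (@sum_le_all R _ (@whyp_ok R 2)) => // h hok.
rewrite (eq_bigr (fun p : 'I_n * 'I_n => h.2 * (if on_hyp h (pt p.1 p.2) then u p.1 p.2 else 0))); last first.
  by move=> p _; case: ifP => _; rewrite ?mulr0 // mulrC.
rewrite -mulr_sumr; apply: ler_piMr; first by case/andP: hok.
by rewrite -big_mkcondr; apply: Hl.
Qed.


Definition Uf (Vf : nat -> nat -> nat -> nat) n x y := Vf x y (n.-1 - x - y)%N.
Definition RX Vf n c := (\sum_(y < n | (c + y < n)%N) Uf Vf n c y)%N.

Lemma sub_sum (T : finType) (P Q : pred T) (F : T -> nat) :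
  (forall x, P x -> Q x) -> (\sum_(x | P x) F x <= \sum_(x | Q x) F x)%N.
Proof.
move=> PQ; rewrite [X in (_ <= X)%N](bigID P) /=.
have -> : (\sum_(i | Q i && P i) F i = \sum_(i | P i) F i)%N.
  by apply: eq_bigl => x; case Px: (P x); rewrite ?andbT ?andbF ?PQ.
exact: leq_addr.
Qed.

Lemma rowx Vf n c : (c < n)%N ->
  (\sum_(p : 'I_n * 'I_n | (p.1 + p.2 < n)%N && (p.1 == c :> nat)) Uf Vf n p.1 p.2)%N = RX Vf n c.
Proof.
move=> hc.
transitivity (\sum_(i : 'I_n | i == Ordinal hc) \sum_(j : 'I_n | (i + j < n)%N) Uf Vf n i j)%N.
  by rewrite pair_big_dep; apply: eq_bigl => p; rewrite andbC.
by rewrite big_pred1_eq.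
Qed.

Lemma rowy Vf n c : (forall a b c, Vf a b c = Vf b a c) -> (c < n)%N ->
  (\sum_(p : 'I_n * 'I_n | (p.1 + p.2 < n)%N && (p.2 == c :> nat)) Uf Vf n p.1 p.2)%N = RX Vf n c.
Proof.
move=> s1 hc; rewrite -(@rowx Vf n c hc).
rewrite (reindex_inj (h := fun p : 'I_n * 'I_n => (p.2, p.1))); last first.
  by move=> [a b] [c' d] /= [-> ->].
apply: eq_big => [p|p _] /=; first by rewrite addnC.
by rewrite /Uf s1 subnAC.
Qed.

Lemma rowz Vf n s : (forall a b c, Vf a b c = Vf b a c) -> (forall a b c, Vf a b c = Vf a c b) ->
  (s < n)%N ->
  (\sum_(p : 'I_n * 'I_n | (p.1 + p.2 < n)%N && (p.1 + p.2 == s)%N) Uf Vf n p.1 p.2)%N = RX Vf n (n.-1 - s).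
Proof.
move=> s1 s2 hs.
transitivity (\sum_(i : 'I_n | true) \sum_(j : 'I_n | (i + j < n)%N && (i + j == s)%N) Uf Vf n i j)%N.
  by rewrite pair_big_dep.
rewrite /RX [RHS]big_mkcond /=.
apply: eq_bigr => x _.
case: (leqP x s) => hxs.
  have hy : (s - x < n)%N by lia.
  rewrite (big_pred1 (Ordinal hy)); last first.
    move=> y /=; apply/idP/idP => [/andP[_ /eqP hxy]|/eqP ->].
      by apply/eqP/val_inj => /=; lia.
    by rewrite /=; apply/andP; split; [lia | apply/eqP; lia].
  have -> : (n.-1 - s + x < n)%N by lia.
  rewrite /Uf /=.
  have -> : (n.-1 - x - (s - x) = n.-1 - s)%N by lia.
  have -> : (n.-1 - (n.-1 - s) - x = s - x)%N by lia.
  by rewrite s2 s1.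
rewrite big_pred0; last by move=> y; apply/negbTE/negP => /andP[_ /eqP]; lia.
by have -> : (n.-1 - s + x < n)%N = false by lia.
Qed.


Lemma sum_const_key (T : finType) (P P' : pred T) (F : T -> nat) (k : T -> nat) (B : nat) :
  (forall p, P p -> P' p) ->
  (forall p q, P p -> P q -> k p = k q) ->
  (forall c, (\sum_(p | P' p && (k p == c)) F p <= B)%N) ->
  (\sum_(p | P p) F p <= B)%N.
Proof.
move=> PP' Hk HB.
case: (pickP P) => [p0 Pp0|P0]; last by rewrite big_pred0.
apply: leq_trans (HB (k p0)).
apply: sub_sum => p Pp; rewrite PP' //=; apply/eqP; exact: Hk.
Qed.

Lemma natr_inj_R (R : realType) (a b : nat) : (a%:R : R) = b%:R -> a = b.
Proof. by move/eqP; rewrite eqr_nat => /eqP. Qed.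



Lemma line_axis (R : realType) Vf n S (h : whyp R 2) :
  (forall a b c, Vf a b c = Vf b a c) -> (forall a b c, Vf a b c = Vf a c b) ->
  (forall c, (c < n)%N -> (RX Vf n c <= S)%N) ->
  (h.1.1 ord0 == 0) || (h.1.1 o1 == 0) || (h.1.1 ord0 == h.1.1 o1) ->
  [exists i, h.1.1 i != 0] ->
  (\sum_(p : 'I_n * 'I_n | (p.1 + p.2 < n)%N && on_hyp h (pt p.1 p.2)) Uf Vf n p.1 p.2 <= S)%N.
Proof.
move=> s1 s2 Hrow Hax /existsP[i Hi].
have Hon : forall p : 'I_n * 'I_n, on_hyp h (pt p.1 p.2) -> (h.1.1 ord0) * (p.1 : nat)%:R + (h.1.1 o1) * (p.2 : nat)%:R = h.1.2.
  by move=> p; rewrite on_hypE => /eqP.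
have Hi' : ((h.1.1 ord0) != 0) || ((h.1.1 o1) != 0).
  move: Hi; have : (i == ord0) || (i == o1).
    by case: i => [[|[|k]] hk] //.
  by case/orP => /eqP -> ->; rewrite ?orbT.
case/orP: Hax => [/orP [/eqP a00 | /eqP a10] | /eqP a01].
-
  have a1n : (h.1.1 o1) != 0 by move: Hi'; rewrite a00 eqxx.
  apply: (@sum_const_key _ _ (fun p : 'I_n * 'I_n => (p.1 + p.2 < n)%N) _ (fun p => (p.2 : nat))).
  + by move=> p /andP[].
  + move=> p q /andP[_ /Hon hp] /andP[_ /Hon hq].
    move: hp hq; rewrite a00 !mul0r !add0r => hp hq.
    apply: (@natr_inj_R R); apply: (mulfI a1n); by rewrite hp hq.
  + move=> c; case: (ltnP c n) => hc.
      by rewrite rowy //; apply: Hrow.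
    by rewrite big_pred0 // => p; apply/negbTE/negP => /andP[_ /eqP e]; move: (ltn_ord p.2); lia.
-
  have a0n : (h.1.1 ord0) != 0 by move: Hi'; rewrite a10 eqxx orbF.
  apply: (@sum_const_key _ _ (fun p : 'I_n * 'I_n => (p.1 + p.2 < n)%N) _ (fun p => (p.1 : nat))).
  + by move=> p /andP[].
  + move=> p q /andP[_ /Hon hp] /andP[_ /Hon hq].
    move: hp hq; rewrite a10 !mul0r !addr0 => hp hq.
    apply: (@natr_inj_R R); apply: (mulfI a0n); by rewrite hp hq.
  + move=> c; case: (ltnP c n) => hc.
      by rewrite rowx //; apply: Hrow.
    by rewrite big_pred0 // => p; apply/negbTE/negP => /andP[_ /eqP e]; move: (ltn_ord p.1); lia.
-
  have a0n : (h.1.1 ord0) != 0 by move: Hi'; rewrite -a01 orbb.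
  apply: (@sum_const_key _ _ (fun p : 'I_n * 'I_n => (p.1 + p.2 < n)%N) _ (fun p => (p.1 + p.2)%N)).
  + by move=> p /andP[].
  + move=> p q /andP[_ /Hon hp] /andP[_ /Hon hq].
    move: hp hq; rewrite -a01 -!mulrDr -!natrD => hp hq.
    apply: (@natr_inj_R R); apply: (mulfI a0n); by rewrite hp hq.
  + move=> c; case: (ltnP c n) => hc.
      rewrite rowz //; apply: Hrow; lia.
    rewrite big_pred0 // => p; apply/negbTE/negP => /andP[h1 /eqP e].
    by rewrite -e in hc; move: (leq_trans h1 hc); rewrite ltnn.
Qed.


Lemma natr_dist1 (R : realType) (u v : nat) : u <> v -> 1 <= `|(u%:R : R) - v%:R|.
Proof.
move=> uv; case: (ltngtP u v) => h.
- rewrite distrC -natrB ?(ltnW h) // ger0_norm ?ler0n // ler1n; lia.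
- rewrite -natrB ?(ltnW h) // ger0_norm ?ler0n // ler1n; lia.
- by move: uv; rewrite h.
Qed.

Lemma noclose (R : realType) (a0 a1 : R) (u v : nat) :
  a0 != 0 -> `|a0| < `|a1| -> a0 = a1 * (u%:R - v%:R) -> False.
Proof.
move=> a0n lt e.
case: (eqVneq u v) => [uv|uv].
  by move: a0n; rewrite e uv subrr mulr0 eqxx.
have d := @natr_dist1 R u v (elimN eqP uv).
have : `|a1| <= `|a0| by rewrite e normrM ler_peMr.
by rewrite leNgt lt.
Qed.

Lemma natr_eq_R (R : realType) (u v : nat) : (u%:R : R) = v%:R -> u = v.
Proof. by move/eqP; rewrite eqr_nat => /eqP. Qed.

Lemma keyx (R : realType) (a0 a1 : R) (xp yp xq yq : nat) :
  a0 != 0 -> a1 != 0 -> `|a0| < `|a1| ->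
  a0 * xp%:R + a1 * yp%:R = a0 * xq%:R + a1 * yq%:R ->
  (xp <= xq + 1)%N -> (xq <= xp + 1)%N -> xp = xq /\ yp = yq.
Proof.
move=> a0n a1n lt e h1 h2.
have : (xp = xq \/ xp = xq + 1 \/ xq = xp + 1)%N by lia.
case=> [exq|[exq|exq]].
- split=> //; apply: (@natr_eq_R R); apply: (mulfI a1n).
  by move: e; rewrite exq => /addrI.
- exfalso; apply: (@noclose R a0 a1 yq yp a0n lt).
  move: e; rewrite exq natrD; lra.
- exfalso; apply: (@noclose R a0 a1 yp yq a0n lt).
  move: e; rewrite exq natrD; lra.
Qed.

Lemma keyz (R : realType) (a0 a1 : R) (xp yp xq yq : nat) :
  a0 != 0 -> a1 != 0 -> a0 != a1 -> a0 * a1 <= 0 ->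
  a0 * xp%:R + a1 * yp%:R = a0 * xq%:R + a1 * yq%:R ->
  (xp + yp <= xq + yq + 1)%N -> (xq + yq <= xp + yp + 1)%N -> xp = xq /\ yp = yq.
Proof.
move=> a0n a1n a01 neg e h1 h2.
have : (xp + yp = xq + yq \/ xp + yp = xq + yq + 1 \/ xq + yq = xp + yp + 1)%N by lia.
case=> [es|es].
  have ex : xp = xq.
    apply: (@natr_eq_R R).
    have es' : (yp%:R : R) = xq%:R + yq%:R - xp%:R by rewrite -!natrD -es natrD; ring.
    rewrite es' in e.
    have : (a0 - a1) * (xp%:R - xq%:R) = 0 by move: e; lra.
    move/eqP; rewrite mulf_eq0 subr_eq0 (negbTE a01) /= subr_eq0 => /eqP //.
  by split=> //; move: es; rewrite ex => /addnI.
exfalso.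
have exn : xp <> xq.
  move=> exy; move: e; rewrite exy => /addrI /(mulfI a1n) /natr_eq_R ey; lia.
have eyn : yp <> yq.
  move=> exy; move: e; rewrite exy => /addIr /(mulfI a0n) /natr_eq_R ey; lia.
have a12 : 0 < a1 ^+ 2 by rewrite exprn_even_gt0 // a1n orbT.
have key : forall X Y : R, 0 < X -> Y < 0 -> a0 * X + a1 * Y = 0 -> False.
  move=> X Y X0 Y0 eXY.
  have e2 : (a0 * a1) * X + a1 ^+ 2 * Y = 0.
    by rewrite -[RHS](mulr0 a1) -eXY; ring.
  nra.
have eR : a0 * (xp%:R - xq%:R) + a1 * (yp%:R - yq%:R) = 0 by move: e; lra.
have : ((xq < xp) && (yp < yq) || (xp < xq) && (yq < yp))%N by lia.
case/orP => /andP[c1 c2].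
  apply: (key (xp%:R - xq%:R) (yp%:R - yq%:R)) => //.
    by rewrite subr_gt0 ltr_nat.
  by rewrite subr_lt0 ltr_nat.
apply: (key (xq%:R - xp%:R) (yq%:R - yp%:R)).
- by rewrite subr_gt0 ltr_nat.
- by rewrite subr_lt0 ltr_nat.
- by move: eR; lra.
Qed.


Lemma keyy (R : realType) (a0 a1 : R) (xp yp xq yq : nat) :
  a0 != 0 -> a1 != 0 -> `|a1| < `|a0| ->
  a0 * xp%:R + a1 * yp%:R = a0 * xq%:R + a1 * yq%:R ->
  (yp <= yq + 1)%N -> (yq <= yp + 1)%N -> xp = xq /\ yp = yq.
Proof.
move=> a0n a1n lt e h1 h2.
have [] := @keyx R a1 a0 yp xp yq xq a1n a0n lt _ h1 h2 => //.
by move: e; lra.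
Qed.

Lemma abs_cases (R : realType) (a0 a1 : R) :
  a0 != a1 -> 0 < a0 * a1 -> ~~ (`|a0| < `|a1|) -> `|a1| < `|a0|.
Proof.
move=> a01 pos nlt.
rewrite lt_neqAle; rewrite -leNgt in nlt; rewrite nlt andbT.
apply/negP => /eqP eabs.
have : a0 ^+ 2 = a1 ^+ 2 by rewrite -[a0 ^+ 2]real_normK ?num_real // -eabs real_normK ?num_real.
move/eqP; rewrite -subr_eq0 subr_sqr mulf_eq0 subr_eq0 (negbTE a01) /= addr_eq0 => /eqP e.
by move: pos; rewrite e mulNr oppr_gt0 ltNge sqr_ge0.
Qed.

Definition keyf (R : realType) (a0 a1 : R) n (p : nat * nat) : nat :=
  if 0 < a0 * a1 then (if `|a0| < `|a1| then p.1 else p.2) else (n.-1 - p.1 - p.2)%N.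

Lemma line_nonaxis (R : realType) Vf n K S m (W : nat -> nat) (h : whyp R 2) :
  (forall a b c, Vf a b c = Vf b a c) -> (forall a b c, Vf a b c = Vf a c b) ->
  (forall a b c, (K < a)%N -> Vf a b c = 0%N) ->
  (\sum_(k < m.+1) W k <= S)%N ->
  (forall a b c, (a + b + c = n.-1)%N -> (a <= K)%N -> (b <= K)%N -> (c <= K)%N ->
     (a %/ 2 <= m)%N && (Vf a b c <= W (a %/ 2))%N) ->
  h.1.1 ord0 != 0 -> h.1.1 o1 != 0 -> h.1.1 ord0 != h.1.1 o1 ->
  (\sum_(p : 'I_n * 'I_n | (p.1 + p.2 < n)%N && on_hyp h (pt p.1 p.2)) Uf Vf n p.1 p.2 <= S)%N.
Proof.
move=> s1 s2 Vout HW HVW a0n a1n a01.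
have Hon : forall p : 'I_n * 'I_n, on_hyp h (pt p.1 p.2) ->
    h.1.1 ord0 * (p.1 : nat)%:R + h.1.1 o1 * (p.2 : nat)%:R = h.1.2.
  by move=> p; rewrite on_hypE => /eqP.
pose hexp (p : 'I_n * 'I_n) := [&& (p.1 <= K)%N, (p.2 <= K)%N & (n.-1 - p.1 - p.2 <= K)%N].
rewrite (bigID hexp) /=.
rewrite [X in (_ + X)%N]big1 ?addn0; last first.
  move=> p /andP[_]; rewrite /hexp /Uf => /negP nh.
  case: (leqP p.1 K) => h1; last by rewrite Vout.
  case: (leqP p.2 K) => h2; last by rewrite s1 Vout.
  case: (leqP (n.-1 - p.1 - p.2) K) => h3; last by rewrite s2 s1 Vout.
  by exfalso; apply: nh; rewrite h1 h2 h3.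
pose key (p : 'I_n * 'I_n) := @keyf R (h.1.1 ord0) (h.1.1 o1) n ((p.1 : nat), (p.2 : nat)).
pose phi (p : 'I_n * 'I_n) : 'I_m.+1 := inord (key p %/ 2).
pose A := [set p : 'I_n * 'I_n | ((p.1 + p.2 < n)%N && on_hyp h (pt p.1 p.2)) && hexp p].
have Hkey : forall p, p \in A -> (key p %/ 2 <= m)%N && (Uf Vf n p.1 p.2 <= W (key p %/ 2))%N.
  move=> [x y]; rewrite inE => /andP[/andP[g _] /and3P[h1 h2 h3]].
  rewrite /= in g h1 h2 h3 *.
  have hs : (x + y + (n.-1 - x - y) = n.-1)%N by lia.
  rewrite /key /keyf /Uf /=; case: ifP => _; [case: ifP => _|].
  - exact: HVW.
  - rewrite s1; apply: HVW => //; lia.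
  - rewrite s2 s1; apply: HVW => //; lia.
have phiK : forall p, p \in A -> (phi p : nat) = (key p %/ 2)%N.
  by move=> p /Hkey /andP[hm _]; rewrite /phi inordK.
apply: (@leq_trans (\sum_(p in A) W (phi p))).
  rewrite [X in (X <= _)%N](eq_bigl (fun p => p \in A)); last by move=> p; rewrite inE.
  apply: leq_sum => p pA; rewrite phiK //; by case/andP: (Hkey p pA).
rewrite -(@big_imset _ _ _ _ _ phi (mem A) W); last first.
  move=> [p1 p2] [q1 q2] pA qA epq.
  have e2 : (key (p1, p2) %/ 2 = key (q1, q2) %/ 2)%N by rewrite -!phiK // epq.
  move: pA qA; rewrite !inE => /andP[/andP[gp /Hon op] hp] /andP[/andP[gq /Hon oq] hq].
  rewrite /= in gp gq op oq.
  have eq : h.1.1 ord0 * (p1 : nat)%:R + h.1.1 o1 * (p2 : nat)%:R =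
            h.1.1 ord0 * (q1 : nat)%:R + h.1.1 o1 * (q2 : nat)%:R by rewrite op oq.
  suff [e1 e2'] : (p1 : nat) = q1 /\ (p2 : nat) = q2.
    by move/val_inj: e1 => ->; move/val_inj: e2' => ->.
  move: e2; rewrite /key /keyf /=; case: ifP => pos; [case: ifP => lt|] => e2.
  - by apply: (@keyx R _ _ _ _ _ _ a0n a1n lt eq); lia.
  - by apply: (@keyy R _ _ _ _ _ _ a0n a1n (@abs_cases R _ _ a01 pos (negbT lt)) eq); lia.
  - apply: (@keyz R _ _ _ _ _ _ a0n a1n a01 _ eq); [|lia|lia].
    by rewrite leNgt pos.
apply: leq_trans HW.
by apply: sub_sum.
Qed.


Lemma total_rows Vf n :
  (\sum_(p : 'I_n * 'I_n | (p.1 + p.2 < n)%N) Uf Vf n p.1 p.2)%N = (\sum_(c < n) RX Vf n c)%N.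
Proof.
transitivity (\sum_(i : 'I_n | true) \sum_(j : 'I_n | (i + j < n)%N) Uf Vf n i j)%N.
  by rewrite pair_big_dep.
by [].
Qed.

Lemma lower_gen (R : realType) Vf n K S m (W : nat -> nat) (H : seq (whyp R 2)) :
  (forall a b c, Vf a b c = Vf b a c) -> (forall a b c, Vf a b c = Vf a c b) ->
  (forall a b c, (K < a)%N -> Vf a b c = 0%N) ->
  (\sum_(k < m.+1) W k <= S)%N ->
  (forall a b c, (a + b + c = n.-1)%N -> (a <= K)%N -> (b <= K)%N -> (c <= K)%N ->
     (a %/ 2 <= m)%N && (Vf a b c <= W (a %/ 2))%N) ->
  (forall c, (c < n)%N -> (RX Vf n c <= S)%N) ->
  (0 < S)%N ->
  frac_cover n H ->
  (\sum_(c < n) RX Vf n c)%:R / S%:R <= total_weight H.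
Proof.
move=> s1 s2 Vout HW HVW Hrow S0 Hc.
rewrite -total_rows natr_sum mulr_suml.
apply: (@weak_dual R n H (fun x y => (Uf Vf n x y)%:R / S%:R)) => //.
  by move=> x y; rewrite divr_ge0 ?ler0n.
move=> h /andP[hex _].
rewrite -mulr_suml -natr_sum ler_pdivrMr ?ltr0n // mul1r ler_nat.
case ax : ((h.1.1 ord0 == 0) || (h.1.1 o1 == 0) || (h.1.1 ord0 == h.1.1 o1)).
  exact: (@line_axis R Vf n S h s1 s2 Hrow ax hex).
move/negbT: ax; rewrite !negb_or => /andP[/andP[a0n a1n] a01].
exact: (@line_nonaxis R Vf n K S m W h s1 s2 Vout HW HVW a0n a1n a01).
Qed.


Definition cx (R : realType) : 'I_2 -> R := fun i => if val i == 0%N then 1 else 0.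
Definition cy (R : realType) : 'I_2 -> R := fun i => if val i == 0%N then 0 else 1.
Definition cxy (R : realType) : 'I_2 -> R := fun _ => 1.
Definition wt (R : realType) (K D a : nat) : R := (K - a)%:R / D%:R.

Definition Hup (R : realType) (n K D : nat) : seq (whyp R 2) :=
  [seq ((cx R, a%:R), wt R K D a) | a <- iota 0 K] ++
  [seq ((cy R, a%:R), wt R K D a) | a <- iota 0 K] ++
  [seq ((cxy R, (n.-1 - a)%:R), wt R K D a) | a <- iota 0 K].

Lemma sum_iota_eq (R : realType) (K t : nat) (f : nat -> R) :
  \sum_(a <- iota 0 K | t == a) f a = if (t < K)%N then f t else 0.
Proof.
elim: K => [|K IH]; first by rewrite big_nil.
rewrite -addn1 iotaD big_cat /= big_cons big_nil IH add0n addr0.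
case: (ltngtP t K) => h.
- by rewrite addr0 addn1 ltnS ltnW.
- by rewrite addr0 addn1 ltnS leqNgt h.
- by rewrite add0r addn1 h ltnS leqnn.
Qed.

Lemma wt_trunc (R : realType) K D t : (if (t < K)%N then wt R K D t else 0) = wt R K D t.
Proof. by case: ifP => // /negbT; rewrite -leqNgt /wt -subn_eq0 => /eqP ->; rewrite mul0r. Qed.

Lemma sum_tri K : (2 * \sum_(a <- iota 0 K) (K - a) = K * K.+1)%N.
Proof.
elim: K => [|K IH]; first by rewrite big_nil.
have e : iota 1 K = [seq (1 + i)%N | i <- iota 0 K] := iotaDl 1 0 K.
rewrite /= big_cons e big_map.
rewrite (eq_bigr (fun a => K - a)%N); last by move=> a _; rewrite add1n subSS.
rewrite mulnDr IH subn0; lia.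
Qed.

Lemma upper_gen (R : realType) n K D :
  (0 < n)%N -> (0 < D)%N -> (K <= n.-1)%N ->
  (forall x y, (x + y < n)%N -> (D <= (K - x) + (K - y) + (K - (n.-1 - x - y)))%N) ->
  frac_cover n (Hup R n K D) /\
  total_weight (Hup R n K D) = 3%:R * (K * K.+1)%:R / (2 * D)%:R.
Proof.
move=> n0 D0 KN Hcov; split; last first.
  rewrite /total_weight /Hup !big_cat !big_map /=.
  have -> : \sum_(a <- iota 0 K) wt R K D a = (\sum_(a <- iota 0 K) (K - a))%:R / D%:R.
    by rewrite natr_sum mulr_suml.
  rewrite -(sum_tri K) natrM mulr_natl.
  have D0' : (D%:R : R) != 0 by rewrite pnatr_eq0 -lt0n.
  field; by rewrite D0'.
split.
  rewrite /Hup !all_cat !all_map; apply/and3P; split; apply/allP => a _ /=;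
    rewrite /whyp_ok /wt divr_ge0 ?ler0n // andbT.
  - by apply/existsP; exists ord0; rewrite /cx /= oner_neq0.
  - by apply/existsP; exists o1; rewrite /cy /= oner_neq0.
  - by apply/existsP; exists ord0; rewrite /cxy oner_neq0.
move=> p; rewrite /in_grid big_ord_recl big_ord_recl big_ord0 addn0.
have -> : lift ord0 (ord0 : 'I_1) = o1 by apply: val_inj.
set x := p ord0; set y := p o1 => gp.
have onE : forall h : whyp R 2, on_hyp h p = (h.1.1 ord0 * x%:R + h.1.1 o1 * y%:R == h.1.2).
  move=> h; rewrite /on_hyp big_ord_recl big_ord_recl big_ord0 addr0 /=.
  by have -> : lift ord0 (ord0 : 'I_1) = o1 by apply: val_inj.
rewrite /Hup !big_cat !big_map /=.
rewrite (eq_bigl (fun a => x == a)); last by move=> a; rewrite onE /cx /= mul1r mul0r addr0 eqr_nat.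
rewrite [X in _ + (X + _)](eq_bigl (fun a => y == a)); last first.
  by move=> a; rewrite onE /cy /= mul1r mul0r add0r eqr_nat.
rewrite [X in _ + (_ + X)]big_seq_cond.
rewrite [X in _ + (_ + X)](eq_bigl (fun a => (a \in iota 0 K) && ((n.-1 - x - y) == a)%N)); last first.
  move=> a; rewrite onE /cxy !mul1r -natrD eqr_nat mem_iota add0n /=.
  case: (ltnP a K) => ha; rewrite ?andbF ?andbT //.
  move: gp; rewrite -!subn1 => gp.
  by apply/idP/idP => /eqP e; apply/eqP; lia.
rewrite -[X in _ + (_ + X)]big_seq_cond.
rewrite !sum_iota_eq !wt_trunc /wt -!mulrDl -!natrD.
have D0' : (0 : R) < D%:R by rewrite ltr0n.
rewrite ler_pdivlMr // mul1r ler_nat.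
have hxy : (x + y < n)%N by rewrite -subn1 in gp; lia.
have := Hcov x y hxy; rewrite -!subn1; lia.
Qed.

Local Close Scope ring_scope.

Lemma sum_rev_nat (G : nat -> nat) a b s : (s + 1 = a + b)%N ->
  (\sum_(a <= y < b) G (s - y) = \sum_(a <= y < b) G y)%N.
Proof.
move=> hs; rewrite big_nat_rev; apply: eq_big_nat => i /andP[h1 h2]; congr G; lia.
Qed.

Lemma P0a j k : (2 * \sum_(0 <= y < k) (3 * (y - j) - 1) = (k - j - 1) * (3 * (k - j - 1) + 1))%N.
Proof.
elim: k => [|k IH]; first by rewrite big_nil.
rewrite big_nat_recr //= mulnDr IH.
case: (leqP k j) => hk.
  have -> : (k.+1 - j - 1 = 0)%N by lia.
  have -> : (k - j - 1 = 0)%N by lia.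
  have -> : (k - j = 0)%N by lia.
  by [].
have [q ->] : exists q, k = (j + q.+1)%N by exists (k - j - 1)%N; lia.
have -> : (j + q.+1 - j - 1 = q)%N by lia.
have -> : ((j + q.+1).+1 - j - 1 = q.+1)%N by lia.
have -> : (j + q.+1 - j = q.+1)%N by lia.
have -> : (3 * q.+1 - 1 = 3 * q + 2)%N by lia.
ring.
Qed.

Lemma P0b j k : (2 * \sum_(0 <= y < k) (3 * (y - j) - 2) = (k - j - 1) * (3 * (k - j - 1) - 1))%N.
Proof.
elim: k => [|k IH]; first by rewrite big_nil.
rewrite big_nat_recr //= mulnDr IH.
case: (leqP k j) => hk.
  have -> : (k.+1 - j - 1 = 0)%N by lia.
  have -> : (k - j - 1 = 0)%N by lia.
  have -> : (k - j = 0)%N by lia.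
  by [].
have [q ->] : exists q, k = (j + q.+1)%N by exists (k - j - 1)%N; lia.
have -> : (j + q.+1 - j - 1 = q)%N by lia.
have -> : ((j + q.+1).+1 - j - 1 = q.+1)%N by lia.
have -> : (j + q.+1 - j = q.+1)%N by lia.
have -> : (3 * q.+1 - 2 = 3 * q + 1)%N by lia.
have -> : (3 * q.+1 - 1 = 3 * q + 2)%N by lia.
case: q => [|q]; first by [].
have -> : (3 * q.+1 - 1 = 3 * q + 2)%N by lia.
ring.
Qed.


Lemma RX_nat Vf n c : (c < n)%N ->
  RX Vf n c = (\sum_(0 <= y < n - c) Vf c y (n.-1 - c - y))%N.
Proof.
move=> hc; rewrite /RX /Uf -(big_mkord (fun y => (c + y < n)%N) (fun y => Vf c y (n.-1 - c - y))) (@big_nat_widen _ _ _ 0 (n - c) n) ?leq_subr //.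
by apply: eq_bigl => y; rewrite /=; apply/idP/idP => h; lia.
Qed.

Lemma sum_zero_nat a b (F : nat -> nat) : (forall y, (a <= y < b)%N -> F y = 0%N) ->
  (\sum_(a <= y < b) F y = 0)%N.
Proof.
move=> H; rewrite big_seq_cond big1 // => y; rewrite andbT mem_index_iota; exact: H.
Qed.

Definition Ga j t := if t == (2*j+1)%N then (2*j+1)%N else (3*(t-j)-1)%N.
Definition Va j a b c :=
  if [&& (a <= 2*j+1)%N, (b <= 2*j+1)%N & (c <= 2*j+1)%N] then (Ga j a + Ga j b + Ga j c)%N else 0%N.

Lemma Ga_low j t : (t <= j)%N -> Ga j t = 0%N.
Proof. by move=> h; rewrite /Ga; case: ifP => [/eqP|_]; lia. Qed.

Lemma Ga_mid j t : (t <= 2*j)%N -> Ga j t = (3*(t-j)-1)%N.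
Proof. by move=> h; rewrite /Ga; case: ifP => [/eqP|_]; lia. Qed.

Lemma TGa j : (2 * \sum_(0 <= y < 2*j+2) Ga j y = (j+1)*(3*j+2))%N.
Proof.
have -> : (2*j+2 = (2*j+1).+1)%N by lia.
rewrite big_nat_recr //= mulnDr.
rewrite (@eq_big_nat _ _ _ 0 (2*j+1) _ (fun y => 3*(y-j)-1)%N); last first.
  by move=> y hy; apply: Ga_mid; lia.
rewrite P0a /Ga eqxx.
have -> : (2 * j + 1 - j - 1 = j)%N by lia.
ring.
Qed.

Lemma RXa_low j c : (c <= j)%N -> RX (Va j) (3*j+2) c = ((j+1)*(3*j+2))%N.
Proof.
move=> hc; rewrite RX_nat; last by lia.
have hn : ((3*j+2).-1 = 3*j+1)%N by rewrite addnS.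
rewrite hn.
rewrite (@big_cat_nat _ _ _ (j - c)) //=; last by lia.
rewrite sum_zero_nat ?add0n; last first.
  by move=> y hy; rewrite /Va; case: ifP => //; move/and3P => [_ _]; lia.
rewrite (@big_cat_nat _ _ _ (2*j+2)) //=; [|lia|lia].
rewrite [X in (_ + X)%N]sum_zero_nat ?addn0; last first.
  by move=> y hy; rewrite /Va; case: ifP => //; move/and3P => [_ h2 _]; lia.
rewrite (@eq_big_nat _ _ _ (j - c) (2*j+2) _ (fun y => Ga j y + Ga j (3*j+1-c-y))%N); last first.
  move=> y hy; rewrite /Va; have -> : [&& (c <= 2*j+1)%N, (y <= 2*j+1)%N & (3*j+1-c-y <= 2*j+1)%N].
    by apply/and3P; split; lia.
  by rewrite Ga_low.
rewrite big_split /= sum_rev_nat; last by lia.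
have -> : (\sum_(j - c <= y < 2 * j + 2) Ga j y = \sum_(0 <= y < 2 * j + 2) Ga j y)%N.
  rewrite [RHS](@big_cat_nat _ _ _ (j - c)) //=; last by lia.
  by rewrite [X in (_ = X + _)%N]sum_zero_nat ?add0n // => y hy; apply: Ga_low; lia.
by rewrite addnn -mul2n TGa.
Qed.

Lemma RXa_mid j c : (j < c)%N -> (c < 2*j+1)%N -> RX (Va j) (3*j+2) c = ((j+1)*(3*j+2))%N.
Proof.
move=> h1 h2; rewrite RX_nat; last by lia.
have hn : ((3*j+2).-1 = 3*j+1)%N by rewrite addnS.
rewrite hn.
rewrite (@eq_big_nat _ _ _ 0 (3*j+2-c) _ (fun y => Ga j c + (3*(y-j)-1) + (3*((3*j+1-c-y)-j)-1))%N); last first.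
  move=> y hy; rewrite /Va; have -> : [&& (c <= 2*j+1)%N, (y <= 2*j+1)%N & (3*j+1-c-y <= 2*j+1)%N].
    by apply/and3P; split; lia.
  by rewrite !Ga_mid //; lia.
rewrite !big_split /= sum_nat_const_nat.
rewrite (@sum_rev_nat (fun t => 3*(t-j)-1)%N 0 (3*j+2-c) (3*j+1-c)); last by lia.
rewrite -addnA addnn -mul2n.
rewrite P0a Ga_mid; last by lia.
have [i [r [hc hj]]] : exists i r, c = (j + i.+1)%N /\ j = (i + r).+1.
  by exists (c - j - 1)%N, (j - (c - j - 1) - 1)%N; split; lia.
have -> : (3 * j + 2 - c - 0 = i + 2*r + 3)%N by lia.
have -> : (3 * (c - j) - 1 = 3 * i + 2)%N by lia.
have -> : (3 * j + 2 - c - j - 1 = r.+1)%N by lia.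
rewrite hj; ring.
Qed.

Lemma RXa_top j : RX (Va j) (3*j+2) (2*j+1) = ((j+1)*(2*j+1))%N.
Proof.
rewrite RX_nat; last by lia.
have hn : ((3*j+2).-1 = 3*j+1)%N by rewrite addnS.
rewrite hn.
rewrite (@eq_big_nat _ _ _ 0 (3*j+2-(2*j+1)) _ (fun y => 2*j+1)%N); last first.
  move=> y hy; rewrite /Va; have -> : [&& (2*j+1 <= 2*j+1)%N, (y <= 2*j+1)%N & (3*j+1-(2*j+1)-y <= 2*j+1)%N].
    by apply/and3P; split; lia.
  have -> : Ga j (2*j+1) = (2*j+1)%N by rewrite /Ga eqxx.
  rewrite !Ga_low; lia.
rewrite sum_nat_const_nat; congr (_ * _)%N; lia.
Qed.

Lemma RXa_out j c : (2*j+1 < c)%N -> RX (Va j) (3*j+2) c = 0%N.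
Proof.
move=> hc; rewrite /RX big1 // => y _; rewrite /Uf /Va; case: ifP => // /and3P[h _ _]; lia.
Qed.

Lemma Va_s1 j a b c : Va j a b c = Va j b a c.
Proof. rewrite /Va; case: (a <= 2*j+1)%N; case: (b <= 2*j+1)%N; case: (c <= 2*j+1)%N => //=; ring. Qed.

Lemma Va_s2 j a b c : Va j a b c = Va j a c b.
Proof. rewrite /Va; case: (a <= 2*j+1)%N; case: (b <= 2*j+1)%N; case: (c <= 2*j+1)%N => //=; ring. Qed.

Lemma Va_out j a b c : (2*j+1 < a)%N -> Va j a b c = 0%N.
Proof. by move=> h; rewrite /Va; case: ifP => // /and3P[h' _ _]; lia. Qed.

Lemma Va_W j a b c : (a + b + c = (3*j+2).-1)%N -> (a <= 2*j+1)%N -> (b <= 2*j+1)%N -> (c <= 2*j+1)%N ->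
  (a %/ 2 <= j)%N && (Va j a b c <= 3*j+2)%N.
Proof.
have hn : ((3*j+2).-1 = 3*j+1)%N by rewrite addnS.
rewrite hn => hs ha hb hc; apply/andP; split; first by lia.
rewrite /Va ha hb hc /= /Ga.
case: ifP => /eqP e1; case: ifP => /eqP e2; case: ifP => /eqP e3; lia.
Qed.


Definition Gb j t := if t == (2*j+2)%N then (j+1)%N else (3*(t-j)-2)%N.
Definition Vb j a b c :=
  if [&& (a <= 2*j+2)%N, (b <= 2*j+2)%N & (c <= 2*j+2)%N] then (Gb j a + Gb j b + Gb j c)%N else 0%N.

Lemma Gb_low j t : (t <= j)%N -> Gb j t = 0%N.
Proof. by move=> h; rewrite /Gb; case: ifP => [/eqP|_]; lia. Qed.

Lemma Gb_mid j t : (t <= 2*j+1)%N -> Gb j t = (3*(t-j)-2)%N.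
Proof. by move=> h; rewrite /Gb; case: ifP => [/eqP|_]; lia. Qed.

Lemma TGb j : (2 * \sum_(0 <= y < 2*j+3) Gb j y = (j+1)*(3*j+4))%N.
Proof.
have -> : (2*j+3 = (2*j+2).+1)%N by lia.
rewrite big_nat_recr //= mulnDr.
rewrite (@eq_big_nat _ _ _ 0 (2*j+2) _ (fun y => 3*(y-j)-2)%N); last first.
  by move=> y hy; apply: Gb_mid; lia.
rewrite P0b /Gb eqxx.
have -> : (2 * j + 2 - j - 1 = j.+1)%N by lia.
have -> : (3 * j.+1 - 1 = 3 * j + 2)%N by lia.
ring.
Qed.

Lemma RXb_low j c : (c <= j)%N -> RX (Vb j) (3*j+3) c = ((j+1)*(3*j+4))%N.
Proof.
move=> hc; rewrite RX_nat; last by lia.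
have hn : ((3*j+3).-1 = 3*j+2)%N by rewrite addnS.
rewrite hn.
rewrite (@big_cat_nat _ _ _ (j - c)) //=; last by lia.
rewrite sum_zero_nat ?add0n; last first.
  by move=> y hy; rewrite /Vb; case: ifP => //; move/and3P => [_ _]; lia.
rewrite (@big_cat_nat _ _ _ (2*j+3)) //=; [|lia|lia].
rewrite [X in (_ + X)%N]sum_zero_nat ?addn0; last first.
  by move=> y hy; rewrite /Vb; case: ifP => //; move/and3P => [_ h2 _]; lia.
rewrite (@eq_big_nat _ _ _ (j - c) (2*j+3) _ (fun y => Gb j y + Gb j (3*j+2-c-y))%N); last first.
  move=> y hy; rewrite /Vb; have -> : [&& (c <= 2*j+2)%N, (y <= 2*j+2)%N & (3*j+2-c-y <= 2*j+2)%N].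
    by apply/and3P; split; lia.
  by rewrite Gb_low.
rewrite big_split /= (@sum_rev_nat (Gb j) (j - c) (2*j+3) (3*j+2-c)); last by lia.
have -> : (\sum_(j - c <= y < 2 * j + 3) Gb j y = \sum_(0 <= y < 2 * j + 3) Gb j y)%N.
  rewrite [RHS](@big_cat_nat _ _ _ (j - c)) //=; last by lia.
  by rewrite [X in (_ = X + _)%N]sum_zero_nat ?add0n // => y hy; apply: Gb_low; lia.
by rewrite addnn -mul2n TGb.
Qed.

Lemma RXb_mid j c : (j < c)%N -> (c < 2*j+2)%N -> RX (Vb j) (3*j+3) c = ((j+1)*(3*j+4))%N.
Proof.
move=> h1 h2; rewrite RX_nat; last by lia.
have hn : ((3*j+3).-1 = 3*j+2)%N by rewrite addnS.
rewrite hn.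
rewrite (@eq_big_nat _ _ _ 0 (3*j+3-c) _ (fun y => Gb j c + (3*(y-j)-2) + (3*((3*j+2-c-y)-j)-2))%N); last first.
  move=> y hy; rewrite /Vb; have -> : [&& (c <= 2*j+2)%N, (y <= 2*j+2)%N & (3*j+2-c-y <= 2*j+2)%N].
    by apply/and3P; split; lia.
  by rewrite !Gb_mid //; lia.
rewrite !big_split /= sum_nat_const_nat.
rewrite (@sum_rev_nat (fun t => 3*(t-j)-2)%N 0 (3*j+3-c) (3*j+2-c)); last by lia.
rewrite -addnA addnn -mul2n.
rewrite P0b Gb_mid; last by lia.
have [i [r [hc hj]]] : exists i r, c = (j + i.+1)%N /\ j = (i + r)%N.
  by exists (c - j - 1)%N, (j - (c - j - 1))%N; split; lia.
have -> : (3 * j + 3 - c - 0 = i + 2*r + 2)%N by lia.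
have -> : (3 * (c - j) - 2 = 3 * i + 1)%N by lia.
have -> : (3 * j + 3 - c - j - 1 = r.+1)%N by lia.
have -> : (3 * r.+1 - 1 = 3 * r + 2)%N by lia.
rewrite hj; ring.
Qed.

Lemma RXb_top j : RX (Vb j) (3*j+3) (2*j+2) = ((j+1)*(j+1))%N.
Proof.
rewrite RX_nat; last by lia.
have hn : ((3*j+3).-1 = 3*j+2)%N by rewrite addnS.
rewrite hn.
rewrite (@eq_big_nat _ _ _ 0 (3*j+3-(2*j+2)) _ (fun y => j+1)%N); last first.
  move=> y hy; rewrite /Vb; have -> : [&& (2*j+2 <= 2*j+2)%N, (y <= 2*j+2)%N & (3*j+2-(2*j+2)-y <= 2*j+2)%N].
    by apply/and3P; split; lia.
  have -> : Gb j (2*j+2) = (j+1)%N by rewrite /Gb eqxx.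
  rewrite !Gb_low; lia.
rewrite sum_nat_const_nat; congr (_ * _)%N; lia.
Qed.

Lemma RXb_out j c : (2*j+2 < c)%N -> RX (Vb j) (3*j+3) c = 0%N.
Proof.
move=> hc; rewrite /RX big1 // => y _; rewrite /Uf /Vb; case: ifP => // /and3P[h _ _]; lia.
Qed.

Lemma Vb_s1 j a b c : Vb j a b c = Vb j b a c.
Proof. rewrite /Vb; case: (a <= 2*j+2)%N; case: (b <= 2*j+2)%N; case: (c <= 2*j+2)%N => //=; ring. Qed.

Lemma Vb_s2 j a b c : Vb j a b c = Vb j a c b.
Proof. rewrite /Vb; case: (a <= 2*j+2)%N; case: (b <= 2*j+2)%N; case: (c <= 2*j+2)%N => //=; ring. Qed.

Lemma Vb_out j a b c : (2*j+2 < a)%N -> Vb j a b c = 0%N.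
Proof. by move=> h; rewrite /Vb; case: ifP => // /and3P[h' _ _]; lia. Qed.

Definition Wb j k := if k == (j+1)%N then (j+1)%N else (3*j+2)%N.

Lemma Vb_W j a b c : (a + b + c = (3*j+3).-1)%N -> (a <= 2*j+2)%N -> (b <= 2*j+2)%N -> (c <= 2*j+2)%N ->
  (a %/ 2 <= j.+1)%N && (Vb j a b c <= Wb j (a %/ 2))%N.
Proof.
have hn : ((3*j+3).-1 = 3*j+2)%N by rewrite addnS.
rewrite hn => hs ha hb hc; apply/andP; split; first by lia.
rewrite /Vb ha hb hc /= /Gb /Wb.
case: ifP => /eqP e0; case: ifP => /eqP e1; case: ifP => /eqP e2; case: ifP => /eqP e3; lia.
Qed.

Lemma Wb_sum j : (\sum_(k < j.+2) Wb j k <= (j+1)*(3*j+4))%N.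
Proof.
rewrite big_ord_recr /= (eq_bigr (fun _ => (3*j+2)%N)); last first.
  by move=> i _; rewrite /Wb; case: ifP => // /eqP e; move: (ltn_ord i); lia.
rewrite big_const_ord iter_addn_0 /Wb.
have -> : (j.+1 == j + 1)%N by rewrite addn1.
lia.
Qed.

Local Open Scope ring_scope.

Lemma RXa_le j c : (c < 3*j+2)%N -> (RX (Va j) (3*j+2) c <= (j+1)*(3*j+2))%N.
Proof.
move=> hc.
case: (leqP c j) => h1; first by rewrite RXa_low.
case: (ltnP c (2*j+1)) => h2; first by rewrite RXa_mid.
case: (ltnP (2*j+1) c) => h3; first by rewrite RXa_out.
have -> : c = (2*j+1)%N by lia.
by rewrite RXa_top leq_mul2l; apply/orP; right; lia.
Qed.

Lemma RXa_total j : (\sum_(c < 3*j+2) RX (Va j) (3*j+2) c = (2*j+1)*((j+1)*(3*j+2)) + (j+1)*(2*j+1))%N.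
Proof.
rewrite -(big_mkord xpredT (fun c => RX (Va j) (3*j+2) c)).
rewrite (@big_cat_nat _ _ _ (2*j+1)) //=; last by lia.
rewrite (@eq_big_nat _ _ _ 0 (2*j+1) _ (fun _ => (j+1)*(3*j+2))%N); last first.
  move=> c hc; case: (leqP c j) => h1; first by rewrite RXa_low.
  by rewrite RXa_mid //; lia.
rewrite sum_nat_const_nat subn0.
rewrite (@big_cat_nat _ _ _ (2*j+2)) //=; [|lia|lia].
have -> : (2*j+2 = (2*j+1).+1)%N by lia.
rewrite big_nat1 RXa_top sum_zero_nat ?addn0 // => c hc.
by apply: RXa_out; lia.
Qed.

Lemma case_a (R : realType) j :
  fstar_is (3 * j + 2) 2 ((2 * j + 1)%:R + (2 * j + 1)%:R / (3 * j + 2)%:R : R).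
Proof.
have hn : ((3*j+2).-1 = 3*j+1)%N by rewrite addnS.
have D0 : (3 * j + 2)%:R != 0 :> R by rewrite pnatr_eq0; lia.
have J0 : (j + 1)%:R != 0 :> R by rewrite pnatr_eq0; lia.
split.
  have [fc tw] := @upper_gen R (3*j+2) (2*j+1) (3*j+2) ltac:(lia) ltac:(lia) ltac:(rewrite hn; lia)
    ltac:(move=> x y hxy; rewrite hn; lia).
  exists (Hup R (3*j+2) (2*j+1) (3*j+2)); split => //.
  rewrite tw; field.
  have hj : (0 : R) <= j%:R by rewrite ler0n.
  by apply: lt0r_neq0; lra.
move=> H fc.
have HW : (\sum_(k < j.+1) (3 * j + 2) <= (j + 1) * (3 * j + 2))%N by rewrite big_const_ord iter_addn_0 mulnC addn1.
have S0 : (0 < (j + 1) * (3 * j + 2))%N by lia.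
have := @lower_gen R (Va j) (3*j+2) (2*j+1) ((j+1)*(3*j+2)) j (fun _ => (3*j+2)%N) H
  (@Va_s1 j) (@Va_s2 j) (@Va_out j) HW (@Va_W j) (@RXa_le j) S0 fc.
rewrite RXa_total.
have -> : ((2*j+1)*((j+1)*(3*j+2)) + (j+1)*(2*j+1))%N%:R / ((j+1)*(3*j+2))%N%:R =
   (2 * j + 1)%:R + (2 * j + 1)%:R / (3 * j + 2)%:R :> R.
  rewrite !natrD !natrM; field.
  have hj : (0 : R) <= j%:R by rewrite ler0n.
  by apply/andP; split; apply: lt0r_neq0; lra.
by [].
Qed.


Lemma RXb_le j c : (c < 3*j+3)%N -> (RX (Vb j) (3*j+3) c <= (j+1)*(3*j+4))%N.
Proof.
move=> hc.
case: (leqP c j) => h1; first by rewrite RXb_low.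
case: (ltnP c (2*j+2)) => h2; first by rewrite RXb_mid.
case: (ltnP (2*j+2) c) => h3; first by rewrite RXb_out.
have -> : c = (2*j+2)%N by lia.
by rewrite RXb_top leq_mul2l; apply/orP; right; lia.
Qed.

Lemma RXb_total j : (\sum_(c < 3*j+3) RX (Vb j) (3*j+3) c = (2*j+2)*((j+1)*(3*j+4)) + (j+1)*(j+1))%N.
Proof.
rewrite -(big_mkord xpredT (fun c => RX (Vb j) (3*j+3) c)).
rewrite (@big_cat_nat _ _ _ (2*j+2)) //=; last by lia.
rewrite (@eq_big_nat _ _ _ 0 (2*j+2) _ (fun _ => (j+1)*(3*j+4))%N); last first.
  move=> c hc; case: (leqP c j) => h1; first by rewrite RXb_low.
  by rewrite RXb_mid //; lia.
rewrite sum_nat_const_nat subn0.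
rewrite (@big_cat_nat _ _ _ (2*j+3)) //=; [|lia|lia].
have -> : (2*j+3 = (2*j+2).+1)%N by lia.
rewrite big_nat1 RXb_top sum_zero_nat ?addn0 // => c hc.
by apply: RXb_out; lia.
Qed.

Lemma case_b (R : realType) j :
  fstar_is (3 * j + 3) 2 ((2 * j + 2)%:R + (j + 1)%:R / (3 * j + 4)%:R : R).
Proof.
have hn : ((3*j+3).-1 = 3*j+2)%N by rewrite addnS.
have hj : (0 : R) <= j%:R by rewrite ler0n.
split.
  have [fc tw] := @upper_gen R (3*j+3) (2*j+2) (3*j+4) ltac:(lia) ltac:(lia) ltac:(rewrite hn; lia)
    ltac:(move=> x y hxy; rewrite hn; lia).
  exists (Hup R (3*j+3) (2*j+2) (3*j+4)); split => //.
  rewrite tw; field.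
  by apply: lt0r_neq0; lra.
move=> H fc.
have S0 : (0 < (j + 1) * (3 * j + 4))%N by lia.
have := @lower_gen R (Vb j) (3*j+3) (2*j+2) ((j+1)*(3*j+4)) j.+1 (Wb j) H
  (@Vb_s1 j) (@Vb_s2 j) (@Vb_out j) (@Wb_sum j) (@Vb_W j) (@RXb_le j) S0 fc.
rewrite RXb_total.
have -> : ((2*j+2)*((j+1)*(3*j+4)) + (j+1)*(j+1))%N%:R / ((j+1)*(3*j+4))%N%:R =
   (2 * j + 2)%:R + (j + 1)%:R / (3 * j + 4)%:R :> R.
  rewrite !natrD !natrM; field.
  by apply/andP; split; apply: lt0r_neq0; lra.
by [].
Qed.


Theorem mainTheorem2 (R : realType) (j : nat) :
  fstar_is (3 * j + 2) 2
    ((2 * j + 1)%:R + (2 * j + 1)%:R / (3 * j + 2)%:R : R) /\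
  fstar_is (3 * j + 3) 2
    ((2 * j + 2)%:R + (j + 1)%:R / (3 * j + 4)%:R : R).
Proof.
split; [exact: case_a | exact: case_b].
Qed.
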